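(* Let $\zeta=e^{2\pi i/3}$ and for $(x,y,z)\in\mathbb{R}^3$ set $b=x+\zeta y+\zeta^2z$, $c=x+\zeta^2y+\zeta z$. Define $F=(F_1,F_2,F_3):\mathbb{R}^3\to\mathbb{R}^3$ by $F_1(x,y,z)=x+y+z$, $$F_2(x,y,z)=\frac{b^2}{c}+\frac{c^2}{b}=\frac{2(x^3+y^3+z^3)+12xyz-3(x^2y+y^2x+y^2z+z^2y+z^2x+x^2z)}{x^2+y^2+z^2-(xy+yz+zx)},$$ $$F_3(x,y,z)=\frac{1}{i}\Big(\frac{b^2}{c}-\frac{c^2}{b}\Big)=\frac{-3\sqrt{3}(x-y)(y-z)(z-x)}{x^2+y^2+z^2-(xy+yz+zx)},$$ when $(x,y,z)$ is not of the form $(t,t,t)$, and $F_2(t,t,t)=F_3(t,t,t)=0$. Then for all $(x,y,z),(x',y',z')\in\mathbb{R}^3$, $F(x,y,z)=F(x',y',z')$ if and only if $(x',y',z')$ is a cyclic permutation of $(x,y,z)$.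
   Context: A cyclic permutation of $(x,y,z)$ is one of $(x,y,z)$, $(y,z,x)$, $(z,x,y)$. *)

(* Defs.v *)
(* R is an arbitrary real closed field (the reals are one). *)
From mathcomp Require Import all_boot all_order all_algebra.
Set Implicit Arguments. Unset Strict Implicit. Unset Printing Implicit Defensive.
Import Order.TTheory GRing.Theory Num.Theory.
Local Open Scope ring_scope.

Section Defs.
Variable R : rcfType.

Definition Qden (x y z : R) : R :=
  x ^+ 2 + y ^+ 2 + z ^+ 2 - (x * y + y * z + z * x).

Definition F1 (x y z : R) : R := x + y + z.

Definition F2 (x y z : R) : R :=
  if (x == y) && (y == z) then 0 else
  (2 * (x ^+ 3 + y ^+ 3 + z ^+ 3) + 12 * x * y * z
   - 3 * (x ^+ 2 * y + y ^+ 2 * x + y ^+ 2 * z + z ^+ 2 * y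
          + z ^+ 2 * x + x ^+ 2 * z)) / Qden x y z.

Definition F3 (x y z : R) : R :=
  if (x == y) && (y == z) then 0 else
  (- 3 * Num.sqrt 3 * (x - y) * (y - z) * (z - x)) / Qden x y z.

Definition F (x y z : R) : R * R * R := (F1 x y z, F2 x y z, F3 x y z).

Definition cyclic_perm (p q : R * R * R) : Prop :=
  let '(x, y, z) := p in
  q = (x, y, z) \/ q = (y, z, x) \/ q = (z, x, y).
End Defs.

(* Main.v *)
Require Import Defs.
From mathcomp Require Import all_boot all_order all_algebra.
From mathcomp Require Import ring lra.
Import Order.TTheory GRing.Theory Num.Theory.
Set Implicit Arguments.
Local Open Scope ring_scope.

Section Aux.
Variable R : rcfType.
Implicit Types x y z : R.

Definition En x y z : R := (2 * (x ^+ 3 + y ^+ 3 + z ^+ 3) + 12 * x * y * z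
   - 3 * (x ^+ 2 * y + y ^+ 2 * x + y ^+ 2 * z + z ^+ 2 * y
          + z ^+ 2 * x + x ^+ 2 * z)).
Definition Dn x y z : R := (x - y) * (y - z) * (z - x).

Lemma idEDN x y z : En x y z ^+ 2 + 27 * Dn x y z ^+ 2 = 4 * Qden x y z ^+ 3.
Proof. rewrite /En /Dn /Qden; ring. Qed.

Lemma Qden_eq0 x y z : Qden x y z = 0 -> x = y /\ y = z.
Proof.
move=> h.
have h2 : (x - y) ^+ 2 + (y - z) ^+ 2 + (z - x) ^+ 2 = 0.
  by rewrite -[RHS](mulr0 2) -h /Qden; ring.
have a : 0 <= (x - y) ^+ 2 by apply: sqr_ge0.
have b : 0 <= (y - z) ^+ 2 by apply: sqr_ge0.
have c : 0 <= (z - x) ^+ 2 by apply: sqr_ge0.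
have a0 : (x - y) ^+ 2 = 0 by lra.
have b0 : (y - z) ^+ 2 = 0 by lra.
move/eqP: a0; rewrite sqrf_eq0 subr_eq0 => /eqP ->.
by move/eqP: b0; rewrite sqrf_eq0 subr_eq0 => /eqP ->.
Qed.

Lemma cond_rot x y z : ((x == y) && (y == z)) = ((y == z) && (z == x)).
Proof.
apply/idP/idP => /andP[/eqP -> /eqP ->]; by rewrite !eqxx.
Qed.

Lemma F_rot x y z : F x y z = F y z x.
Proof.
rewrite /F /F1 /F2 /F3 cond_rot /Qden.
case: ifP => _; congr (_, _, _); try ring; congr (_ / _); ring.
Qed.

Lemma s3_neq0 : (- 3 * Num.sqrt 3 : R) != 0.
Proof.
rewrite mulf_eq0 negb_or oppr_eq0 sqrtr_eq0 pnatr_eq0 /=.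
by rewrite -ltNge ltr0n.
Qed.

Lemma F3E x y z : ~~ ((x == y) && (y == z)) ->
  F3 x y z = (- 3 * Num.sqrt 3) * (Dn x y z / Qden x y z).
Proof.
move=> h; rewrite /F3 (negbTE h) /Dn; ring.
Qed.

Lemma F2E x y z : ~~ ((x == y) && (y == z)) ->
  F2 x y z = En x y z / Qden x y z.
Proof. by move=> h; rewrite /F2 (negbTE h). Qed.

Lemma Qden_neq0 x y z : ~~ ((x == y) && (y == z)) -> Qden x y z != 0.
Proof.
move=> h; apply/eqP => /Qden_eq0 [e1 e2]; move: h; by rewrite e1 e2 !eqxx.
Qed.

Lemma degen x y z : ~~ ((x == y) && (y == z)) -> F2 x y z = 0 -> F3 x y z = 0 -> False.
Proof.
move=> h; rewrite (@F2E x y z h) (@F3E x y z h) => /eqP e /eqP d.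
have hN := @Qden_neq0 x y z h.
move: e; rewrite mulf_eq0 invr_eq0 (negbTE hN) orbF => /eqP e.
move: d; rewrite mulf_eq0 (negbTE s3_neq0) /= mulf_eq0 invr_eq0 (negbTE hN) orbF => /eqP d.
have := idEDN x y z; rewrite e d.
move=> /esym/eqP; rewrite !expr2 !mul0r !mulr0 addr0 mulf_eq0 => /orP[|]; [by rewrite pnatr_eq0 | by rewrite !mulf_eq0 (negbTE hN)].
Qed.

Lemma two (b c b' c' : R) : b + c = b' + c' -> b * c = b' * c' ->
  (b' = b /\ c' = c) \/ (b' = c /\ c' = b).
Proof.
move=> s p.
have : (b' - b) * (b' - c) = 0.
  have -> : (b' - b) * (b' - c) = b' ^+ 2 - (b + c) * b' + b * c by ring.
  rewrite s p; ring.
move/eqP; rewrite mulf_eq0 !subr_eq0 => /orP [/eqP e|/eqP e].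
  left; split => //; subst b'; apply: (addrI b); by rewrite -s.
right; split => //; subst b'; apply: (addrI c); by rewrite -s addrC.
Qed.

Lemma sp (a b c b' c' : R) : a + b + c = a + b' + c' ->
  a * b + b * c + c * a = a * b' + b' * c' + c' * a -> b + c = b' + c' /\ b * c = b' * c'.
Proof.
move=> h1 h2.
have s : b + c = b' + c' by apply: (addrI a); rewrite !addrA.
split => //.
have -> : b * c = (a * b + b * c + c * a) - a * (b + c) by ring.
rewrite h2 s; ring.
Qed.

Lemma D0 (a b c : R) : Dn a b c = - Dn a b c -> a = b \/ b = c \/ c = a.
Proof.
move=> e.
have : (a - b) * (b - c) * (c - a) = 0.
  have : 2 * Dn a b c = 0 by rewrite mulr2n mulrDl mul1r {1}e addNr.
  by move/eqP; rewrite mulf_eq0 pnatr_eq0 /= => /eqP.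
move/eqP; rewrite !mulf_eq0 !subr_eq0 => /orP [/orP [/eqP ?|/eqP ?]|/eqP ?]; tauto.
Qed.

Ltac fin := solve [left; reflexivity | right; left; reflexivity | right; right; reflexivity].

Lemma key x y z x' y' z' :
  x + y + z = x' + y' + z' ->
  x * y + y * z + z * x = x' * y' + y' * z' + z' * x' ->
  x * y * z = x' * y' * z' ->
  Dn x y z = Dn x' y' z' -> cyclic_perm (x, y, z) (x', y', z').
Proof.
move=> h1 h2 h3 hD.
have r : (x' - x) * (x' - y) * (x' - z) = 0.
  have -> : (x' - x) * (x' - y) * (x' - z) =
     x' ^+ 3 - (x + y + z) * x' ^+ 2 + (x * y + y * z + z * x) * x' - x * y * z by ring.
  rewrite h1 h2 h3; ring.
rewrite /cyclic_perm.
move/eqP: r; rewrite !mulf_eq0 !subr_eq0 => /orP [/orP [/eqP e|/eqP e]|/eqP e]; subst x'.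
- have [s p] := @sp x y z y' z' h1 h2.
  have [[-> ->]|[e1 e2]] := @two _ _ _ _ s p; first fin.
  subst y' z'.
  have : Dn x y z = - Dn x y z by rewrite {2}hD /Dn; ring.
  by move/D0 => [?|[?|?]]; subst; fin.
- have h1' : y + x + z = y + y' + z' by rewrite -h1; ring.
  have h2' : y * x + x * z + z * y = y * y' + y' * z' + z' * y by rewrite -h2; ring.
  have [s p] := @sp y x z y' z' h1' h2'.
  have [[e1 e2]|[e1 e2]] := @two _ _ _ _ s p; subst y' z'; last fin.
  have : Dn x y z = - Dn x y z by rewrite {2}hD /Dn; ring.
  by move/D0 => [?|[?|?]]; subst; fin.
- have h1' : z + x + y = z + y' + z' by rewrite -h1; ring.
  have h2' : z * x + x * y + y * z = z * y' + y' * z' + z' * z by rewrite -h2; ring.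
  have [s p] := @sp z x y y' z' h1' h2'.
  have [[e1 e2]|[e1 e2]] := @two _ _ _ _ s p; subst y' z'; first fin.
  have : Dn x y z = - Dn x y z by rewrite {2}hD /Dn; ring.
  by move/D0 => [?|[?|?]]; subst; fin.
Qed.

End Aux.

Lemma nondeg (R : rcfType) (x y z x' y' z' : R) :
  ~~ ((x == y) && (y == z)) -> ~~ ((x' == y') && (y' == z')) ->
  F x y z = F x' y' z' -> cyclic_perm (x, y, z) (x', y', z').
Proof.
move=> hc hc'; rewrite /F /F1 => -[e1 e2 e3].
rewrite (@F2E _ x y z hc) (@F2E _ x' y' z' hc') in e2.
rewrite (@F3E _ x y z hc) (@F3E _ x' y' z' hc') in e3.
move/(mulfI (@s3_neq0 R)): e3 => e3.
have hN := @Qden_neq0 _ x y z hc.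
have hN' := @Qden_neq0 _ x' y' z' hc'.
have iE := @idEDN R x y z. have iE' := @idEDN R x' y' z'.
move: e2 e3 hN hN' iE iE'.
set N := Qden x y z; set N' := Qden x' y' z'.
set E := En R x y z; set E' := En R x' y' z'.
set D := Dn R x y z; set D' := Dn R x' y' z'.
move=> e2 e3 hN hN' iE iE'.
have hEN : E * N' = E' * N.
  have -> : E = E' / N' * N by rewrite -e2 divfK.
  by rewrite mulrAC divfK.
have hDN : D * N' = D' * N.
  have -> : D = D' / N' * N by rewrite -e3 divfK.
  by rewrite mulrAC divfK.
have h : (E ^+ 2 + 27 * D ^+ 2) * N' ^+ 2 = (E' ^+ 2 + 27 * D' ^+ 2) * N ^+ 2.
  have -> : (E ^+ 2 + 27 * D ^+ 2) * N' ^+ 2 = (E * N') ^+ 2 + 27 * (D * N') ^+ 2 by ring.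
  rewrite hEN hDN; ring.
rewrite iE iE' in h.
have k : 4 * N ^+ 2 * N' ^+ 2 * (N - N') = 4 * N ^+ 3 * N' ^+ 2 - 4 * N' ^+ 3 * N ^+ 2 by ring.
rewrite h subrr in k.
have eN : N = N'.
  move/eqP: k; rewrite !mulf_eq0 (negbTE hN) (negbTE hN') pnatr_eq0 /=.
  by rewrite subr_eq0 => /eqP.
have eE : E = E'.
  by rewrite -(divfK hN E) e2 eN (divfK hN').
have eD : D = D'.
  by rewrite -(divfK hN D) e3 eN (divfK hN').
have three : (3 : R) != 0 by rewrite pnatr_eq0.
have h2 : x * y + y * z + z * x = x' * y' + y' * z' + z' * x'.
  apply: (mulfI three).
  have -> : 3 * (x * y + y * z + z * x) = (x + y + z) ^+ 2 - N by rewrite /N /Qden; ring.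
  have -> : 3 * (x' * y' + y' * z' + z' * x') = (x' + y' + z') ^+ 2 - N' by rewrite /N' /Qden; ring.
  by rewrite e1 eN.
have t27 : (27 : R) != 0 by rewrite pnatr_eq0.
have h3 : x * y * z = x' * y' * z'.
  apply: (mulfI t27).
  have -> : 27 * (x * y * z) = E - 2 * (x + y + z) ^+ 3 + 9 * (x + y + z) * (x * y + y * z + z * x)
    by rewrite /E /En; ring.
  have -> : 27 * (x' * y' * z') = E' - 2 * (x' + y' + z') ^+ 3 + 9 * (x' + y' + z') * (x' * y' + y' * z' + z' * x')
    by rewrite /E' /En; ring.
  by rewrite eE e1 h2.
exact: key e1 h2 h3 eD.
Qed.

Lemma degF (R : rcfType) (x y z x' y' z' : R) :
  (x == y) && (y == z) -> F x y z = F x' y' z' -> x' = y' /\ y' = z'.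
Proof.
move=> /andP [/eqP exy /eqP eyz] hF.
case hc': ((x' == y') && (y' == z')).
  by move/andP: hc' => [/eqP -> /eqP ->].
exfalso; move: hF; rewrite /F => -[_ e2 e3].
apply: (@degen R x' y' z'); first by rewrite hc'.
  by rewrite -e2 /F2 exy eyz !eqxx.
by rewrite -e3 /F3 exy eyz !eqxx.
Qed.

Theorem lemma3 (R : rcfType) (x y z x' y' z' : R) :
  F x y z = F x' y' z' <-> cyclic_perm (x, y, z) (x', y', z').
Proof.
split; last first.
  case=> [[-> -> ->]|[[-> -> ->]|[-> -> ->]]] //; first exact: F_rot.
  by rewrite F_rot F_rot.
move=> hF.
case hc: ((x == y) && (y == z)).
  have [e1 e2] := degF hc hF.
  move/andP: hc => [/eqP exy /eqP eyz]; subst y z y' z'.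
  move: hF; rewrite /F /F1 => -[h _ _].
  have -> : x' = x by lra.
  by left.
case hc': ((x' == y') && (y' == z')).
  have [e1 e2] := degF hc' (esym hF).
  move/andP: hc' => [/eqP exy /eqP eyz]; subst.
  by move: hc; rewrite !eqxx.
by apply: nondeg hF; rewrite ?hc ?hc'.
Qed.
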